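(* Under Rayleigh fading ($m_{\rm rd}=m_{\rm sd}=1$), for every $r>0$, $P_{\rm r}>0$ and $\mathcal C_x\in[0,1)$, \[ \mathcal P_{\rm rd}(P_{\rm r},\mathcal C_x)=1-\frac{\exp\!\left(-\frac{\Psi_r(\mathcal C_x)}{P_{\rm r}\pi_{\rm rd}(1-\mathcal C_x^2)}\right)}{P_{\rm s}\pi_{\rm sd}\frac{\Psi_r(\mathcal C_x)}{P_{\rm r}\pi_{\rm rd}(1-\mathcal C_x^2)}+1}. \] In particular, for $\mathcal C_x=0$ this equals $1-\frac{P_{\rm r}\pi_{\rm rd}e^{-\eta/(P_{\rm r}\pi_{\rm rd})}}{P_{\rm r}\pi_{\rm rd}+P_{\rm s}\pi_{\rm sd}\eta}$, and as $\mathcal C_x\to1$ it tends to $1-\frac{e^{-\gamma/(2P_{\rm r}\pi_{\rm rd})}}{\frac{\gamma P_{\rm s}\pi_{\rm sd}}{2P_{\rm r}\pi_{\rm rd}}+1}$.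
   Context: Let $P_{\rm s}>0$, $P_{\rm r}>0$. Rayleigh fading: $g_{\rm rd},g_{\rm sd}$ are independent exponential random variables with means $\pi_{\rm rd},\pi_{\rm sd}>0$. For $\mathcal C_x\in[0,1)$ define $R_{\rm rd}(P_{\rm r},\mathcal C_x)=\tfrac12\log_2\frac{(P_{\rm r}g_{\rm rd}+P_{\rm s}g_{\rm sd}+1)^2-(P_{\rm r}g_{\rm rd}\mathcal C_x)^2}{(P_{\rm s}g_{\rm sd}+1)^2}$. For a target rate $r>0$ put $\gamma=2^{2r}-1$, $\eta=2^r-1$ and $\Psi_r(x)=\sqrt{1+\gamma(1-x^2)}-1$. The R–D outage probability is $\mathcal P_{\rm rd}=\mathbb P\{R_{\rm rd}<r\}$. *)

(* Defs.v *)
From Stdlib Require Import Reals Lra.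
Open Scope R_scope.

Definition log2 (z : R) : R := ln z / ln 2.

Definition R_rd (Ps Pr Cx grd gsd : R) : R :=
  / 2 * log2 (((Pr * grd + Ps * gsd + 1) ^ 2 - (Pr * grd * Cx) ^ 2)
              / (Ps * gsd + 1) ^ 2).

Definition gam (r : R) : R := Rpower 2 (2 * r) - 1.
Definition eta (r : R) : R := Rpower 2 r - 1.
Definition Psi (r x : R) : R := sqrt (1 + gam r * (1 - x ^ 2)) - 1.

Definition exp_pdf (mu x : R) : R := / mu * exp (- x / mu).

Definition IntegralIs (f : R -> R) (a b v : R) : Prop :=
  exists pr : Riemann_integrable f a b, RiemannInt pr = v.

Definition ImproperInt0 (f : R -> R) (l : R) : Prop :=
  forall eps, 0 < eps -> exists B, forall b, B <= b ->
    exists v, IntegralIs f 0 b v /\ Rabs (v - l) < eps.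

Definition indic {P : Prop} (d : {P} + {~ P}) : R := if d then 1 else 0.

(* P{ R_rd < r } = p, where g_rd ~ Exp(mean pird), g_sd ~ Exp(mean pisd)
   independent: the probability is the iterated integral of the joint
   density times the indicator of the outage event. *)
Definition outage_prob_is (Ps Pr Cx pird pisd r p : R) : Prop :=
  exists h : R -> R,
    (forall y, 0 <= y ->
       ImproperInt0
         (fun x => exp_pdf pird x * exp_pdf pisd y *
                   indic (Rlt_dec (R_rd Ps Pr Cx x y) r)) (h y)) /\
    ImproperInt0 h p.

Definition Prd_formula (Ps Pr Cx pird pisd r : R) : R :=
  let t := Psi r Cx / (Pr * pird * (1 - Cx ^ 2)) in
  1 - exp (- t) / (Ps * pisd * t + 1).

(* Main.v *)
Require Import Defs.
From Coquelicot Require Import Coquelicot.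
From Stdlib Require Import Reals Lra Psatz.
Open Scope R_scope.

Lemma to_II f a b v : is_RInt f a b v -> IntegralIs f a b v.
Proof.
  intros H. exists (ex_RInt_Reals_0 f a b (ex_intro _ v H)).
  rewrite <- RInt_Reals. now apply is_RInt_unique.
Qed.

Lemma exp_int A mu a b : 0 < mu ->
  is_RInt (fun x => A * exp (- x / mu)) a b (A * mu * (exp (- a / mu) - exp (- b / mu))).
Proof.
  intros Hmu.
  assert (H := @is_RInt_derive R_CompleteNormedModule (fun x => - (A * mu) * exp (- x / mu))
     (fun x => A * exp (- x / mu)) a b).
  match type of H with _ -> _ -> is_RInt _ _ _ ?v => replace (A * mu * (exp (- a / mu) - exp (- b / mu))) with v end.
  - apply H.
    + intros x _. auto_derive. auto. unfold Rdiv. field. lra.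
    + intros x _. exact (@ex_derive_continuous R_AbsRing R_NormedModule (fun x => A * exp (- x / mu)) x ltac:(auto_derive; auto)).
  - unfold minus, plus, opp; simpl. ring.
Qed.

Lemma step_int A mu c b g : 0 < mu -> 0 < c -> 0 <= b ->
  (forall x, 0 < x < c -> g x = A * exp (- x / mu)) ->
  (forall x, c < x -> g x = 0) ->
  is_RInt g 0 b (A * mu * (1 - exp (- Rmin b c / mu))).
Proof.
  intros Hmu Hc Hb H1 H2.
  destruct (Rle_dec b c) as [Hbc|Hbc].
  - rewrite Rmin_left by lra.
    replace 1 with (exp (- 0 / mu)) by (unfold Rdiv; rewrite Ropp_0, Rmult_0_l; apply exp_0).
    apply is_RInt_ext with (fun x => A * exp (- x / mu)); [|apply exp_int; auto].
    intros x Hx. rewrite Rmin_left in Hx by lra. rewrite Rmax_right in Hx by lra.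
    symmetry; apply H1; lra.
  - rewrite Rmin_right by lra.
    replace (A * mu * (1 - exp (- c / mu))) with (plus (A * mu * (exp (- 0 / mu) - exp (- c / mu))) (scal (b - c) 0)).
    2:{ unfold plus, scal; simpl. unfold mult; simpl.
        replace (- 0 / mu) with 0 by (field; lra). rewrite exp_0. ring. }
    apply (@is_RInt_Chasles R_NormedModule) with c.
    + apply is_RInt_ext with (fun x => A * exp (- x / mu)); [|apply exp_int; auto].
      intros x Hx. rewrite Rmin_left in Hx by lra. rewrite Rmax_right in Hx by lra.
      symmetry; apply H1; lra.
    + apply is_RInt_ext with (fun _ => 0); [|apply (@is_RInt_const R_NormedModule)].
      intros x Hx. rewrite Rmin_left in Hx by lra. rewrite Rmax_right in Hx by lra.
      symmetry; apply H2; lra.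
Qed.

Lemma gam_pos r : 0 < r -> 0 < gam r.
Proof.
  intros Hr. unfold gam.
  assert (Rpower 2 0 < Rpower 2 (2*r)) by (apply Rpower_lt; lra). rewrite Rpower_O in H by lra. lra.
Qed.

Lemma ln1gam r : ln (1 + gam r) = 2 * r * ln 2.
Proof. unfold gam, Rpower. replace (1 + (exp (2 * r * ln 2) - 1)) with (exp (2*r*ln 2)) by ring.
  apply ln_exp. Qed.

Lemma alg_iff g s m a : 0 < g -> 0 < s -> 0 < m -> 0 <= a ->
  ((a + m) ^ 2 - (a * (1 - s)) * a < (1 + g) * m ^ 2 <->
   a < m * ((sqrt (1 + g * s) - 1) / s)).
Proof.
  intros Hg Hs Hm Ha.
  set (S := sqrt (1 + g * s)).
  assert (HS2 : S * S = 1 + g * s) by (apply sqrt_sqrt; nra).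
  assert (HS1 : 1 < S).
  { assert (sqrt 1 < sqrt (1+g*s)) by (apply sqrt_lt_1; nra). rewrite sqrt_1 in H. exact H. }
  assert (Hid : s * ((a + m) ^ 2 - (a * (1 - s)) * a - (1 + g) * m ^ 2)
              = (s * a + m - S * m) * (s * a + m + S * m)).
  { transitivity ((s*a+m)^2 - (S*S)*m^2); [rewrite HS2; ring | ring]. }
  assert (Hpos : 0 < s * a + m + S * m) by nra.
  replace (m * ((S - 1) / s)) with ((S - 1) * m / s) by (field; lra).
  split; intros H.
  - apply Rmult_lt_reg_l with s; auto. replace (s * ((S - 1) * m / s)) with ((S-1)*m) by (field; lra).
    assert (s * ((a + m) ^ 2 - (a * (1 - s)) * a - (1 + g) * m ^ 2) < 0) by nra.
    rewrite Hid in H0. nra.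
  - assert (s * a < (S-1)*m).
    { apply Rmult_lt_compat_l with (r := s) in H; auto.
      replace (s * ((S - 1) * m / s)) with ((S-1)*m) in H by (field; lra). exact H. }
    assert (s * ((a + m) ^ 2 - (a * (1 - s)) * a - (1 + g) * m ^ 2) < 0) by (rewrite Hid; nra).
    nra.
Qed.

Lemma rd_iff Ps Pr C r x y : 0 < Ps -> 0 < Pr -> 0 < r -> 0 <= C < 1 -> 0 <= x -> 0 <= y ->
  (R_rd Ps Pr C x y < r <-> x < (Ps * y + 1) * (Psi r C / (Pr * (1 - C ^ 2)))).
Proof.
  intros HPs HPr Hr HC Hx Hy.
  assert (Hg := gam_pos r Hr).
  set (m := Ps * y + 1). set (a := Pr * x). set (s := 1 - C^2).
  assert (Hm : 0 < m) by (unfold m; nra).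
  assert (Ha : 0 <= a) by (unfold a; nra).
  assert (Hs : 0 < s) by (unfold s; nra).
  set (N := (Pr * x + Ps * y + 1) ^ 2 - (Pr * x * C) ^ 2).
  assert (HN : N = (a + m) ^ 2 - (a * (1 - s)) * a) by (unfold N, a, m, s; ring).
  assert (HNp : 0 < N).
  { rewrite HN. replace ((a + m) ^ 2 - a * (1 - s) * a) with ((a*(1-C)+m)*(a*(1+C)+m)) by (unfold s; ring).
    apply Rmult_lt_0_compat; nra. }
  assert (Hm2 : 0 < m ^ 2) by nra.
  assert (HQ : 0 < N / m ^ 2) by (apply Rdiv_lt_0_compat; auto).
  assert (Hl2 : 0 < ln 2) by (rewrite <- ln_1; apply ln_increasing; lra).
  assert (E1 : R_rd Ps Pr C x y < r <-> ln (N / m ^ 2) < ln (1 + gam r)).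
  { unfold R_rd, log2. change (((Pr * x + Ps * y + 1) ^ 2 - (Pr * x * C) ^ 2) / (Ps * y + 1) ^ 2) with (N / m^2). rewrite ln1gam.
    split; intros H.
    - apply Rmult_lt_compat_r with (r := 2 * ln 2) in H; [|lra].
      replace (/ 2 * (ln (N / m ^ 2) / ln 2) * (2 * ln 2)) with (ln (N / m ^ 2)) in H by (field; lra).
      lra.
    - apply Rmult_lt_reg_r with (2 * ln 2); [lra|].
      replace (/ 2 * (ln (N / m ^ 2) / ln 2) * (2 * ln 2)) with (ln (N / m ^ 2)) by (field; lra).
      lra. }
  assert (E2 : ln (N / m ^ 2) < ln (1 + gam r) <-> N / m ^ 2 < 1 + gam r).
  { split; intros H. apply ln_lt_inv; auto; lra. apply ln_increasing; auto. }
  assert (E3 : N / m ^ 2 < 1 + gam r <-> N < (1 + gam r) * m ^ 2).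
  { split; intros H.
    - apply Rmult_lt_compat_r with (r := m^2) in H; auto.
      replace (N / m ^ 2 * m ^ 2) with N in H by (field; lra). exact H.
    - apply Rmult_lt_reg_r with (m^2); auto.
      replace (N / m ^ 2 * m ^ 2) with N by (field; lra). exact H. }
  assert (E4 := alg_iff (gam r) s m a Hg Hs Hm Ha). rewrite <- HN in E4.
  assert (E5 : a < m * ((sqrt (1 + gam r * s) - 1) / s) <-> x < m * (Psi r C / (Pr * s))).
  { unfold Psi. fold s. unfold a.
    replace (m * ((sqrt (1 + gam r * s) - 1) / s)) with (Pr * (m * ((sqrt (1 + gam r * s) - 1) / (Pr * s)))) by (field; lra).
    split; intros H. apply Rmult_lt_reg_l with Pr; auto. apply Rmult_lt_compat_l; auto. }
  fold s. tauto.
Qed.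

Lemma exp_le_mono a b : a <= b -> exp a <= exp b.
Proof. intros H. destruct (Rle_lt_or_eq_dec a b H) as [H1|H1]. left; now apply exp_increasing. subst; lra. Qed.

Lemma Psi_pos r C : 0 < r -> 0 <= C < 1 -> 0 < Psi r C.
Proof.
  intros Hr HC. assert (Hg := gam_pos r Hr). unfold Psi.
  assert (0 < 1 - C^2) by nra. assert (0 < gam r * (1 - C^2)) by (apply Rmult_lt_0_compat; auto).
  assert (sqrt 1 < sqrt (1 + gam r * (1 - C^2))) by (apply sqrt_lt_1; lra).
  rewrite sqrt_1 in H1. lra.
Qed.

Lemma part1 Ps Pr pird pisd r Cx : 0 < Ps -> 0 < Pr -> 0 < pird -> 0 < pisd -> 0 < r ->
  0 <= Cx < 1 -> outage_prob_is Ps Pr Cx pird pisd r (Prd_formula Ps Pr Cx pird pisd r).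
Proof.
  intros HPs HPr Hpird Hpisd Hr HC.
  assert (HP := Psi_pos r Cx Hr HC).
  assert (Hs : 0 < 1 - Cx^2) by nra.
  set (t := Psi r Cx / (Pr * pird * (1 - Cx ^ 2))).
  assert (Ht : 0 < t) by (unfold t; apply Rdiv_lt_0_compat; auto; apply Rmult_lt_0_compat; auto; nra).
  set (k := Psi r Cx / (Pr * (1 - Cx ^ 2))).
  assert (Hk : k = t * pird) by (unfold k, t; field; lra).
  assert (Hkp : 0 < k) by (rewrite Hk; nra).
  set (c := fun y => (Ps * y + 1) * k).
  set (h := fun y => (/ pird * exp_pdf pisd y) * pird * (1 - exp (- c y / pird))).
  exists h. split.
  - intros y Hy eps Heps.
    assert (Hc : 0 < c y) by (unfold c; apply Rmult_lt_0_compat; nra).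
    exists (c y). intros b Hb.
    exists (/ pird * exp_pdf pisd y * pird * (1 - exp (- Rmin b (c y) / pird))). split.
    + apply to_II. apply step_int; auto; try lra.
      * intros x Hx. destruct (Rlt_dec (R_rd Ps Pr Cx x y) r) as [H|H]; simpl.
        -- unfold exp_pdf. ring.
        -- exfalso. apply H. apply rd_iff; auto; try lra. unfold c, k in Hx. lra.
      * intros x Hx. destruct (Rlt_dec (R_rd Ps Pr Cx x y) r) as [H|H]; simpl.
        -- exfalso. apply rd_iff in H; auto; try lra. unfold c, k in Hx. lra.
        -- ring.
    + rewrite Rmin_right by lra. unfold h. rewrite Rminus_diag, Rabs_R0. exact Heps.
  - set (lam := / pisd + Ps * t).
    assert (Hlam : 0 < lam) by (unfold lam; assert (0 < / pisd) by (apply Rinv_0_lt_compat; auto); nra).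
    set (D := / pisd * exp (- t) / lam).
    assert (HD : 0 < D) by (unfold D; assert (0 < / pisd) by (apply Rinv_0_lt_compat; auto);
        assert (0 < exp (-t)) by apply exp_pos; apply Rdiv_lt_0_compat; nra).
    set (H := fun y => - exp (- y / pisd) + D * exp (- (lam * y))).
    assert (Hh : forall y, h y = / pisd * exp (- y / pisd) - / pisd * exp (- t) * exp (- (lam * y))).
    { intros y. unfold h, exp_pdf.
      assert (exp (- y / pisd) * exp (- c y / pird) = exp (- t) * exp (- (lam * y))).
      { rewrite <- !exp_plus. f_equal. unfold c, lam. rewrite Hk. field. lra. }
      idtac.
      replace (/ pird * (/ pisd * exp (- y / pisd)) * pird * (1 - exp (- c y / pird)))
        with (/ pisd * exp (- y / pisd) - / pisd * (exp (- y / pisd) * exp (- c y / pird))) by (field; lra).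
      rewrite H0. ring. }
    assert (HI : forall b, is_RInt h 0 b (H b - H 0)).
    { intros b.
      assert (HH := @is_RInt_derive R_CompleteNormedModule H
        (fun y => / pisd * exp (- y / pisd) - / pisd * exp (- t) * exp (- (lam * y))) 0 b).
      apply is_RInt_ext with (fun y => / pisd * exp (- y / pisd) - / pisd * exp (- t) * exp (- (lam * y))).
      { intros x _. symmetry. apply Hh. }
      match type of HH with _ -> _ -> is_RInt _ _ _ ?v => replace (H b - H 0) with v end.
      - apply HH.
        + intros x _. unfold H. auto_derive. auto. unfold D, Rdiv. field. lra.
        + intros x _. exact (@ex_derive_continuous R_AbsRing R_NormedModule
             (fun y => / pisd * exp (- y / pisd) - / pisd * exp (- t) * exp (- (lam * y))) x
             ltac:(auto_derive; auto)).
      - unfold minus, plus, opp; simpl. ring. }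
    assert (Hl : Prd_formula Ps Pr Cx pird pisd r = - H 0).
    { unfold Prd_formula. cbv zeta. fold t. unfold H, D, lam.
      replace (- 0 / pisd) with 0 by (field; lra). replace (- (( / pisd + Ps * t) * 0)) with 0 by ring.
      rewrite exp_0. field. split; [lra|]. assert (0 < Ps * t * pisd) by (apply Rmult_lt_0_compat; nra). lra. }
    rewrite Hl. intros eps Heps.
    set (L := ln (eps / (1 + D))).
    exists (pisd * (Rabs L + 1)). intros b Hb.
    exists (H b - H 0). split; [apply to_II, HI|].
    assert (HB0 : 0 <= pisd * (Rabs L + 1)) by (assert (0 <= Rabs L) by apply Rabs_pos; nra).
    assert (Hb0 : 0 <= b) by lra.
    assert (E1 : exp (- b / pisd) < eps / (1 + D)).
    { unfold L in *. rewrite <- (exp_ln (eps / (1 + D))) by (apply Rdiv_lt_0_compat; lra).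
      apply exp_increasing.
      assert (b / pisd >= Rabs (ln (eps / (1 + D))) + 1).
      { apply Rle_ge. apply Rmult_le_reg_l with pisd; auto.
        replace (pisd * (b / pisd)) with b by (field; lra). lra. }
      assert (- ln (eps / (1 + D)) <= Rabs (ln (eps / (1 + D)))) by
        (rewrite <- Rabs_Ropp; apply Rle_abs).
      unfold Rdiv at 1. rewrite Ropp_mult_distr_l_reverse. fold (b / pisd). lra. }
    assert (E2 : exp (- (lam * b)) <= exp (- b / pisd)).
    { apply exp_le_mono. unfold lam. 
      replace (- b / pisd) with (- (/ pisd * b)) by (field; lra).
      assert (0 <= Ps * t * b) by (apply Rmult_le_pos; nra). nra. }
    assert (E3 : 0 < exp (- (lam * b))) by apply exp_pos.
    replace (H b - H 0 - - H 0) with (H b) by ring.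
    unfold H.
    assert (E4: eps / (1 + D) * (1 + D) = eps) by (field; lra).
    unfold Rabs; destruct (Rcase_abs _); nra.
Qed.

Lemma main_aux (Ps Pr pird pisd r : R) :
  0 < Ps -> 0 < Pr -> 0 < pird -> 0 < pisd -> 0 < r ->
  (forall Cx, 0 <= Cx < 1 ->
     outage_prob_is Ps Pr Cx pird pisd r (Prd_formula Ps Pr Cx pird pisd r)) /\
  outage_prob_is Ps Pr 0 pird pisd r
    (1 - Pr * pird * exp (- eta r / (Pr * pird)) / (Pr * pird + Ps * pisd * eta r)) /\
  limit1_in (fun Cx => Prd_formula Ps Pr Cx pird pisd r) (fun Cx => 0 <= Cx < 1)
    (1 - exp (- gam r / (2 * Pr * pird)) / (gam r * Ps * pisd / (2 * Pr * pird) + 1)) 1.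
Proof.
  intros HPs HPr Hpird Hpisd Hr.
  assert (Hg := gam_pos r Hr).
  split; [|split].
  - intros; apply part1; auto.
  - assert (HPsi : Psi r 0 = eta r).
    { unfold Psi, eta. unfold gam.
      replace (1 + (Rpower 2 (2 * r) - 1) * (1 - 0 ^ 2)) with (Rpower 2 r * Rpower 2 r).
      + rewrite sqrt_square; [ring|]. unfold Rpower. left; apply exp_pos.
      + rewrite <- Rpower_plus. replace (r + r) with (2 * r) by ring. ring. }
    assert (He : 0 < eta r) by (rewrite <- HPsi; apply Psi_pos; lra).
    match goal with |- outage_prob_is _ _ _ _ _ _ ?v => replace v with (Prd_formula Ps Pr 0 pird pisd r) end.
    { apply part1; auto; lra. }
    unfold Prd_formula. cbv zeta. rewrite HPsi.
    replace (1 - 0 ^ 2) with 1 by ring.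
    replace (- (eta r / (Pr * pird * 1))) with (- eta r / (Pr * pird)) by (field; lra).
    assert (0 < Ps * pisd * eta r) by (apply Rmult_lt_0_compat; nra).
    assert (0 < Pr * pird) by nra.
    field. repeat split; lra.
  - set (T := fun C => gam r / ((sqrt (1 + gam r * (1 - C ^ 2)) + 1) * Pr * pird)).
    set (G := fun C => 1 - exp (- T C) / (Ps * pisd * T C + 1)).
    assert (HEq : forall C, 0 <= C < 1 -> Prd_formula Ps Pr C pird pisd r = G C).
    { intros C HC. unfold Prd_formula, G, T. cbv zeta.
      assert (Hs : 0 < 1 - C ^ 2) by nra.
      set (s := 1 - C^2) in *.
      assert (HS2 : sqrt (1 + gam r * s) * sqrt (1 + gam r * s) = 1 + gam r * s) by (apply sqrt_sqrt; nra).
      assert (HS0 : 0 <= sqrt (1 + gam r * s)) by apply sqrt_pos.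
      replace (Psi r C / (Pr * pird * s)) with (gam r / ((sqrt (1 + gam r * s) + 1) * Pr * pird)).
      { reflexivity. }
      unfold Psi. fold s.
      set (S := sqrt (1 + gam r * s)) in *.
      replace (gam r) with ((S * S - 1) / s) at 1 by (rewrite HS2; field; lra).
      field. repeat split; lra. }
    assert (HG1 : G 1 = 1 - exp (- gam r / (2 * Pr * pird)) / (gam r * Ps * pisd / (2 * Pr * pird) + 1)).
    { unfold G, T. replace (1 + gam r * (1 - 1 ^ 2)) with 1 by ring. rewrite sqrt_1.
      replace (- (gam r / ((1 + 1) * Pr * pird))) with (- gam r / (2 * Pr * pird)) by (field; lra).
      replace (Ps * pisd * (gam r / ((1 + 1) * Pr * pird))) with (gam r * Ps * pisd / (2 * Pr * pird)) by (field; lra).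
      reflexivity. }
    assert (HD : ex_derive G 1).
    { unfold G, T. auto_derive.
      replace (1 + gam r * (1 + - (1 * (1 * 1)))) with 1 by ring. rewrite sqrt_1.
      assert (0 < (1 + 1) * Pr * pird) by (apply Rmult_lt_0_compat; nra).
      assert (0 < gam r * / ((1 + 1) * Pr * pird)) by (apply Rmult_lt_0_compat; auto; apply Rinv_0_lt_compat; auto).
      assert (0 < Ps * pisd * (gam r * / ((1 + 1) * Pr * pird))) by (apply Rmult_lt_0_compat; nra).
      repeat split; lra. }
    assert (HC : continuity_pt G 1).
    { apply continuity_pt_filterlim. exact (@ex_derive_continuous R_AbsRing R_NormedModule G 1 HD). }
    rewrite <- HG1. intros eps Heps.
    destruct (HC eps Heps) as [alp [Halp Hx]].
    exists alp. split; auto. intros x [Dx Hdx].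
    simpl. rewrite HEq by auto.
    apply (Hx x). split; auto. split. exact I. lra.
Qed.

Theorem corollary1 (Ps Pr pird pisd r : R) :
  0 < Ps -> 0 < Pr -> 0 < pird -> 0 < pisd -> 0 < r ->
  (forall Cx, 0 <= Cx < 1 ->
     outage_prob_is Ps Pr Cx pird pisd r (Prd_formula Ps Pr Cx pird pisd r)) /\
  outage_prob_is Ps Pr 0 pird pisd r
    (1 - Pr * pird * exp (- eta r / (Pr * pird)) / (Pr * pird + Ps * pisd * eta r)) /\
  limit1_in (fun Cx => Prd_formula Ps Pr Cx pird pisd r) (fun Cx => 0 <= Cx < 1)
    (1 - exp (- gam r / (2 * Pr * pird)) / (gam r * Ps * pisd / (2 * Pr * pird) + 1)) 1.
Proof. exact (main_aux Ps Pr pird pisd r). Qed.
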